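(* Let $X=\{x_1,\dots,x_n\}\subset\mathbb{R}^m$ be a dataset, let $S=\{S_1,\dots,S_k\}$ be a partition of $X$ into clusters with centroids $z_1,\dots,z_k\in\mathbb{R}^m$, and let $p>1$. Suppose the features of $X$ consist of at least one relevant feature and at least one noise feature, and that each noise feature is drawn independently from a common distribution. Then, for a cluster $S_l$ and exponent $p>1$, at least one feature $v$ has weight strictly higher than $\frac{1}{m}$, i.e. $w_{lv}^{(p)}>\frac{1}{m}$.
   Context: For a cluster $S_l$ with centroid $z_l$, a feature $v$ and an exponent $p>1$, the within-cluster dispersion is $D_{lv}^{(p)}=\sum_{x_i\in S_l}|x_{iv}-z_{lv}|^p$ (assumed positive), and the Minkowski weighted $k$-means feature weight is \[ w_{lv}^{(p)}=\frac{1}{\sum_{u=1}^m\left(\frac{D_{lv}^{(p)}}{D_{lu}^{(p)}}\right)^{\frac{1}{p-1}}}, \] so that $\sum_{v=1}^m w_{lv}^{(p)}=1$ for each $l$. The features are partitioned into a set $R$ of relevant features and a set of noise features, where a feature $v$ is a noise feature if for each cluster $S_l$ and each $p>1$, $\frac{1}{|R|}\sum_{u\in R}(D_{lv}^{(p)}/D_{lu}^{(p)})^{1/(p-1)}>1$. *)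

(* Defs.v *)
From HB Require Import structures.
From mathcomp Require Import all_boot all_order all_algebra.
From mathcomp Require Import all_classical all_reals all_analysis.

Set Implicit Arguments.
Unset Strict Implicit.
Unset Printing Implicit Defensive.

Import Order.TTheory GRing.Theory Num.Theory.
Local Open Scope ring_scope.

(* Dataset X = {x_1..x_n} in R^m : X i v is feature v of point i.
   Partition into k clusters given by the assignment cl : 'I_n -> 'I_k
   (x_i \in S_l  iff  cl i = l); centroids z : 'I_k -> 'I_m -> R. *)

Definition dispersion (R : realType) (n m k : nat)
  (X : 'I_n -> 'I_m -> R) (cl : 'I_n -> 'I_k) (z : 'I_k -> 'I_m -> R)
  (p : R) (l : 'I_k) (v : 'I_m) : R :=
  \sum_(i < n | cl i == l) `|X i v - z l v| `^ p.

Definition mwk_weight (R : realType) (n m k : nat)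
  (X : 'I_n -> 'I_m -> R) (cl : 'I_n -> 'I_k) (z : 'I_k -> 'I_m -> R)
  (p : R) (l : 'I_k) (v : 'I_m) : R :=
  1 / \sum_(u < m)
        (dispersion X cl z p l v / dispersion X cl z p l u) `^ (1 / (p - 1)).

Definition noise_feature (R : realType) (n m k : nat)
  (X : 'I_n -> 'I_m -> R) (cl : 'I_n -> 'I_k) (z : 'I_k -> 'I_m -> R)
  (Rel : {set 'I_m}) (v : 'I_m) : Prop :=
  forall (l : 'I_k) (p : R), 1 < p ->
    1 < (#|Rel|%:R)^-1 *
        \sum_(u in Rel)
          (dispersion X cl z p l v / dispersion X cl z p l u) `^ (1 / (p - 1)).

(* Main.v *)
Require Import Defs.
From HB Require Import structures.
From mathcomp Require Import all_boot all_order all_algebra.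
From mathcomp Require Import all_classical all_reals all_analysis.
Import Order.TTheory GRing.Theory Num.Theory.
Local Open Scope ring_scope.

Theorem mainTheorem2 (R : realType) (n m k : nat)
  (X : 'I_n -> 'I_m -> R) (cl : 'I_n -> 'I_k) (z : 'I_k -> 'I_m -> R)
  (Rel : {set 'I_m})
  (Dpos : forall (p : R) (l : 'I_k) (v : 'I_m), 1 < p ->
            0 < dispersion X cl z p l v)
  (Rel_nonempty : exists u : 'I_m, u \in Rel)
  (noise_compl : forall v : 'I_m, v \notin Rel -> noise_feature X cl z Rel v)
  (noise_exists : exists v : 'I_m, v \notin Rel)
  (l : 'I_k) (p : R) (hp : 1 < p) :
  exists v : 'I_m, (m%:R)^-1 < mwk_weight X cl z p l v.
Proof.
set D := fun u => dispersion X cl z p l u.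
have Dp : forall u, 0 < D u by move=> u; exact: Dpos.
have a0 : 0 < 1 / (p - 1) by rewrite divr_gt0 // subr_gt0.
case: Rel_nonempty => u0 u0R.
case: noise_exists => w wN.
pose v0 := [arg min_(i < u0) D i]%O.
have v0min : forall u, D v0 <= D u.
  by move=> u; rewrite /v0; case: arg_minP => // i _ H; apply: H.
exists v0; rewrite /mwk_weight -/D.
have p1 : forall x : R, 1 `^ x = 1 by move=> x; rewrite powR1.
set f := fun u => (D v0 / D u) `^ (1 / (p - 1)).
have f1 : forall u, f u <= 1.
  move=> u; rewrite /f -[X in _ (_ `^ _) X](p1 (1 / (p - 1))).
  rewrite ge0_ler_powR ?nnegrE ?(ltW a0) ?divr_ge0 ?(ltW (Dp _)) //.
  by rewrite ler_pdivrMr // mul1r.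
have fv0 : f v0 = 1 by rewrite /f divff ?gt_eqF // p1.
have S1 : 1 <= \sum_u f u.
  rewrite (bigD1 v0) //= fv0 lerDl; apply: sumr_ge0 => i _; exact: powR_ge0.
case: (pselect (exists u, D v0 < D u)) => [[u Hu]|Hn].
  have fu : f u < 1.
    rewrite /f -[X in _ (_ `^ _) X](p1 (1 / (p - 1))).
    rewrite gt0_ltr_powR ?nnegrE ?divr_ge0 ?(ltW (Dp _)) //.
    by rewrite ltr_pdivrMr // mul1r.
  have Sm : \sum_u f u < m%:R.
    have -> : m%:R = \sum_(u < m) (1 : R) by rewrite sumr_const card_ord.
    rewrite (bigD1 u) //= [X in _ < X](bigD1 u) //=.
    rewrite ltr_leD //; apply: ler_sum => i _; exact: f1.
  have S0 : 0 < \sum_u f u by apply: lt_le_trans S1.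
  rewrite mul1r ltf_pV2 ?posrE ?Sm //.
  exact: lt_trans Sm.
exfalso.
have Heq : forall u, D u = D v0.
  move=> u; apply/eqP; rewrite eq_le v0min andbT leNgt; apply/negP => H.
  by apply: Hn; exists u.
have Hs : \sum_(u in Rel) (dispersion X cl z p l w / dispersion X cl z p l u) `^ (1 / (p - 1)) = #|Rel|%:R.
  rewrite -sum1_card natr_sum; apply: eq_bigr => i _.
  have -> : dispersion X cl z p l w / dispersion X cl z p l i = 1.
    have e1 := Heq i; have e2 := Heq w; rewrite /D in e1 e2 *.
    rewrite e1 e2 divff //; exact: lt0r_neq0 (Dp v0).
  exact: p1.
have := noise_compl w wN l p hp; rewrite Hs.
have Rn : #|Rel|%:R != 0 :> R.
  rewrite pnatr_eq0 -lt0n card_gt0; apply/set0Pn; by exists u0.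
rewrite mulVf // ltxx.
done.
Qed.
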